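(* For every integer $n \geq 3$ there exists a cyclic $n$-dimensional unique sink orientation $\psi$ which is not $i$-nice for any $i < n$.
   Context: Let $Q^n = 2^{[n]}$ be the vertex set of the $n$-cube, with $u,v$ adjacent iff $|u\oplus v|=1$; faces are $F_{J,v}=\{u : v\oplus u\subseteq J\}$ for $J\subseteq[n]$. A unique sink orientation (USO) is an orientation of the cube's edges such that every nonempty face has a unique sink (vertex with no outgoing edges within the face); it is cyclic if it contains a directed cycle. The outmap $s_\psi(v)$ is the set of coordinates $j$ such that the edge $\{v,v\oplus\{j\}\}$ is directed away from $v$; the global sink is the vertex $t$ with $s_\psi(t)=\emptyset$. Let $d(v,u)$ be the length of a shortest directed path from $v$ to $u$ ($\infty$ if none). The reachmap is $r_\psi(v)=s_\psi(v)\cup\{j : \exists u \text{ reachable from } v \text{ by a directed path with } j\in s_\psi(u)\}$. A vertex $v$ is $i$-covered by $u$ if $d(v,u)\le i$ and $r_\psi(u)\subsetneq r_\psi(v)$; $\psi$ is $i$-nice if every vertex other than the global sink is $i$-covered by some vertex. *)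

(* Defs.v *)
From mathcomp Require Import all_boot.
Set Implicit Arguments. Unset Strict Implicit. Unset Printing Implicit Defensive.

(* Vertices of the n-cube Q^n = 2^[n] : subsets of 'I_n. *)
Notation vert n := {set 'I_n}.

Definition symd n (u v : vert n) : vert n := (u :\: v) :|: (v :\: u).

Definition adjacent n (u v : vert n) : bool := #|symd u v| == 1.

Record orientation (n : nat) := Orientation {
  arc : rel (vert n);
  arc_adj : forall u v, arc u v -> adjacent u v;
  arc_one : forall u v, adjacent u v -> arc u v (+) arc v u }.

Definition face n (J v : vert n) : {set vert n} := [set u | symd v u \subset J].

Definition sink_in n (psi : orientation n) (F : {set vert n}) (u : vert n) : bool :=
  (u \in F) && [forall w, (w \in F) ==> ~~ arc psi u w].

Definition USO n (psi : orientation n) : Prop :=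
  forall J v : vert n, face J v != set0 ->
    exists! u, sink_in psi (face J v) u.

Definition cyclic n (psi : orientation n) : Prop :=
  exists v w : vert n, arc psi v w /\ connect (arc psi) w v.

Definition outmap n (psi : orientation n) (v : vert n) : vert n :=
  [set j | [exists w, arc psi v w && (symd v w == [set j])]].

Definition reachmap n (psi : orientation n) (v : vert n) : vert n :=
  outmap psi v :|: \bigcup_(u | connect (arc psi) v u) outmap psi u.

Definition dist_le n (psi : orientation n) (v u : vert n) (i : nat) : Prop :=
  exists p : seq (vert n), [/\ path (arc psi) v p, last v p = u & size p <= i].

Definition covered n (psi : orientation n) (i : nat) (v u : vert n) : Prop :=
  dist_le psi v u i /\ reachmap psi u \proper reachmap psi v.

Definition global_sink n (psi : orientation n) (t : vert n) : bool :=
  outmap psi t == set0.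

Definition nice n (psi : orientation n) (i : nat) : Prop :=
  forall v : vert n, ~~ global_sink psi v -> exists u, covered psi i v u.

(* Main.v *)
Require Import Defs.
From mathcomp Require Import all_boot zify.
Set Implicit Arguments. Unset Strict Implicit. Unset Printing Implicit Defensive.

Lemma ordS_neq n (k : 'I_n) : 1 < n -> ordS k != k.
Proof. move=> Hn; apply/eqP => /(congr1 val) /=.
have := ltn_ord k. case: (ltngtP k.+1 n) => H1 H2.
- by rewrite modn_small //; lia.
- lia.
- rewrite H1 modnn => E; lia.
Qed.

Lemma ordS2_neq n (k : 'I_n) : 2 < n -> ordS (ordS k) != k.
Proof. move=> Hn; apply/eqP => /(congr1 val) /=.
have := ltn_ord k. case: (ltngtP k.+1 n) => H1 H2.
- rewrite (modn_small H1). case: (ltngtP k.+2 n) => H3.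
  + rewrite modn_small //; lia.
  + lia.
  + rewrite H3 modnn; lia.
- lia.
- rewrite H1 modnn modn_small; lia.
Qed.

Lemma in_symd n (u w : vert n) x : (x \in symd u w) = (x \in u) (+) (x \in w).
Proof. rewrite /symd !inE. by case: (x \in u); case: (x \in w). Qed.

Lemma symdC n (u w : vert n) : symd u w = symd w u.
Proof. apply/setP => x; rewrite !in_symd. by case: (x \in u); case: (x \in w). Qed.

Lemma symdK n (u w : vert n) : symd u (symd u w) = w.
Proof. apply/setP => x; rewrite !in_symd. by case: (x \in u); case: (x \in w). Qed.

Definition tog n (u : vert n) j := symd u [set j].

Lemma pr_neq1 n (k k' : 'I_n) : 1 < n -> [set k; ordS k] != [set k'].
Proof. move=> Hn; apply/eqP => E.
have := ordS_neq k Hn. 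
have h1 : k \in [set k'] by rewrite -E !inE eqxx.
have h2 : ordS k \in [set k'] by rewrite -E !inE eqxx orbT.
move: h1 h2; rewrite !inE => /eqP -> /eqP ->. by rewrite eqxx.
Qed.

Definition pr n (k : 'I_n) : vert n := [set k; ordS k].

Lemma tog1 n (k : 'I_n) : 1 < n -> tog [set k] (ordS k) = pr k.
Proof. move=> Hn; have := ordS_neq k Hn => H.
apply/setP => x; rewrite /tog /pr in_symd !inE.
case: (x =P k) => [->|_]; first by rewrite eq_sym (negbTE H).
by case: (x == ordS k).
Qed.

Lemma togK n (u : vert n) j : tog (tog u j) j = u.
Proof. apply/setP => x; rewrite /tog !in_symd. by case: (x \in u); case: (x \in [set j]). Qed.

Lemma tog2 n (k : 'I_n) : 1 < n -> tog (pr k) (ordS k) = [set k].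
Proof. move=> Hn; by rewrite -tog1 // togK. Qed.

Lemma symd_tog n (u : vert n) j : symd u (tog u j) = [set j].
Proof. by rewrite /tog symdK. Qed.

Lemma in_tog n (u : vert n) j x : (x \in tog u j) = (x \in u) (+) (x == j).
Proof. by rewrite /tog in_symd inE. Qed.

Definition fl n (u : vert n) (j : 'I_n) : bool :=
  [exists k, ((u == [set k]) || (u == pr k)) && (j == ordS k)].

Lemma fl_tog1 n (u : vert n) j : 1 < n -> fl u j -> fl (tog u j) j.
Proof. move=> Hn /existsP [k /andP [H /eqP ->]]; apply/existsP; exists k.
case/orP: H => /eqP ->.
- by rewrite tog1 // !eqxx orbT.
- by rewrite tog2 // !eqxx.
Qed.

Lemma fl_tog n (u : vert n) j : 1 < n -> fl (tog u j) j = fl u j.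
Proof. move=> Hn; apply/idP/idP; last exact: fl_tog1.
by move/(fl_tog1 Hn); rewrite togK.
Qed.

Definition arcR n (u w : vert n) : bool :=
  [exists j, (symd u w == [set j]) && ((j \in u) (+) fl u j)].

Lemma arcR_adj n (u w : vert n) : arcR u w -> adjacent u w.
Proof. by move=> /existsP [j /andP [/eqP E _]]; rewrite /adjacent E cards1. Qed.

Lemma arcRE n (u w : vert n) j : symd u w = [set j] -> arcR u w = (j \in u) (+) fl u j.
Proof. move=> E; apply/existsP/idP => [[j' /andP [/eqP E' H]]|H].
- by move: E'; rewrite E => /set1_inj ->.
- by exists j; rewrite E eqxx.
Qed.

Lemma arcR_tog n (u : vert n) j : arcR u (tog u j) = (j \in u) (+) fl u j.
Proof. by apply: arcRE; rewrite symd_tog. Qed.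

Lemma arcR_one n (u w : vert n) : 1 < n -> adjacent u w -> arcR u w (+) arcR w u.
Proof. move=> Hn /cards1P [j E].
have Ew : w = tog u j by rewrite /tog -E symdK.
rewrite (arcRE E) (arcRE (j:=j)); last by rewrite symdC.
rewrite Ew fl_tog // in_tog eqxx.
by case: (j \in u); case: (fl u j).
Qed.

Definition psi n (Hn : 1 < n) : orientation n :=
  @Orientation n (@arcR n) (@arcR_adj n) (fun u w => @arcR_one n u w Hn).

Definition so n (u : vert n) : vert n := [set j | (j \in u) (+) fl u j].

Lemma outmapE n (Hn : 1 < n) u : outmap (psi Hn) u = so u.
Proof. apply/setP => j; rewrite !inE; apply/existsP/idP => [[w /andP [H /eqP E]]|H].
- by rewrite -(arcRE E).
- by exists (tog u j); rewrite symd_tog eqxx andbT /= arcR_tog.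
Qed.

Lemma key_uniq n (k k' : 'I_n) (u : vert n) : 2 < n ->
  (u == [set k]) || (u == pr k) -> (u == [set k']) || (u == pr k') -> k = k'.
Proof. move=> Hn. have Hn1 : 1 < n by lia.
case/orP => /eqP ->; case/orP => /eqP.
- exact: set1_inj.
- by move=> E; have := pr_neq1 k' k Hn1; rewrite -/(pr k') -E eqxx.
- by move=> E; have := pr_neq1 k k' Hn1; rewrite -/(pr k) E eqxx.
- move=> E.
  have h1 : k \in pr k' by rewrite -E !inE eqxx.
  have h2 : ordS k \in pr k' by rewrite -E !inE eqxx orbT.
  move: h1 h2; rewrite !inE; case: (k =P k') => // _ /= /eqP Ek.
  case/orP => /eqP.
  + move=> E2. have := ordS2_neq k' Hn. by rewrite -Ek E2 eqxx.
  + move=> E2. have := ordS_neq k Hn1. by rewrite E2 -Ek eqxx.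
Qed.

Lemma fl_cases n (u : vert n) : 2 < n ->
  (forall j, ~~ fl u j) \/
  exists k, ((u == [set k]) || (u == pr k)) /\ (forall j, fl u j = (j == ordS k)).
Proof. move=> Hn.
case: (boolP [exists k, (u == [set k]) || (u == pr k)]) => [/existsP [k Hk]|H].
- right; exists k; split => // j; apply/existsP/idP => [[k' /andP [Hk' /eqP ->]]|/eqP ->].
  + by rewrite (key_uniq Hn Hk Hk').
  + by exists k; rewrite Hk eqxx.
- left => j; apply/existsP => [[k /andP [Hk _]]]; move/negP: H; apply; apply/existsP; by exists k.
Qed.

Lemma in_pr_sub n (k : 'I_n) (u : vert n) x :
  (u == [set k]) || (u == pr k) -> x \in u -> x \in pr k.
Proof. case/orP => /eqP -> //; rewrite !inE => ->; by []. Qed.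

Lemma in_pr_self n (k : 'I_n) (u : vert n) :
  (u == [set k]) || (u == pr k) -> k \in u.
Proof. by case/orP => /eqP ->; rewrite !inE eqxx. Qed.

Lemma sw_aux n (k k' : 'I_n) (u u' : vert n) : 2 < n -> k != k' ->
  (u == [set k]) || (u == pr k) -> (u' == [set k']) || (u' == pr k') ->
  (forall j, (j \in u) (+) (j \in u') -> (j == ordS k) (+) (j == ordS k')) ->
  k = ordS k'.
Proof. move=> Hn Hkk Hk Hk' H. have Hn1 : 1 < n by lia.
have ku := in_pr_self Hk.
case: (boolP (k \in u')) => Ku'.
- move: (in_pr_sub Hk' Ku'); rewrite !inE (negbTE Hkk) /=; by move/eqP.
- have := H k; rewrite ku (negbTE Ku') /= eq_sym (negbTE (ordS_neq k Hn1)) /=.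
  by move=> /(_ isT) /eqP.
Qed.

Lemma sw_one n (k : 'I_n) (u u' : vert n) : 2 < n ->
  (forall j, fl u j = (j == ordS k)) -> (forall j, ~~ fl u' j) ->
  (forall j, (j \in u) (+) (j \in u') -> fl u j (+) fl u' j) ->
  u = u'.
Proof. move=> Hn Hu Hu' H. have Hn1 : 1 < n by lia.
case: (u =P u') => // Nu. exfalso.
have E : u' = tog u (ordS k).
  apply/setP => x; rewrite in_tog.
  case: (boolP ((x \in u) (+) (x \in u'))) => Hx.
  - have := H x Hx; rewrite Hu (negbTE (Hu' x)) addbF => /eqP Ex; subst x; rewrite eqxx.
    by move: Hx; case: (ordS k \in u); case: (ordS k \in u').
  - have Hx2 : x != ordS k.
      apply/eqP => Ex.
      have [y Hy] : exists y, (y \in u) (+) (y \in u').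
        case: (boolP [exists y, (y \in u) (+) (y \in u')]) => [/existsP //|/existsP NE].
        case: Nu; apply/setP => y. case: (boolP ((y \in u) (+) (y \in u'))) => Hy.
        + by case: NE; exists y.
        + by move: Hy; case: (y \in u); case: (y \in u').
      have := H y Hy; rewrite Hu (negbTE (Hu' y)) addbF => /eqP Ey.
      by move: Hx Hy; rewrite Ex Ey => /negbTE ->.
    rewrite (negbTE Hx2) addbF.
    by move: Hx; case: (x \in u); case: (x \in u').
have := Hu' (ordS k). by rewrite E fl_tog // Hu eqxx.
Qed.

Lemma sw n (u u' : vert n) : 2 < n -> u != u' ->
  exists j, (j \in symd u u') && (j \in symd (so u) (so u')).
Proof. move=> Hn Nu. have Hn1 : 1 < n by lia.
case: (boolP [exists j, (j \in symd u u') && (j \in symd (so u) (so u'))]) => [/existsP //|/existsPn NE]; exfalso.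
have H : forall j, (j \in u) (+) (j \in u') -> fl u j (+) fl u' j.
  move=> j Hj; have := NE j; rewrite !in_symd !inE Hj /=.
  by move: Hj; case: (j \in u); case: (j \in u'); case: (fl u j); case: (fl u' j).
have [y Hy] : exists y, (y \in u) (+) (y \in u').
  case: (boolP [exists y, (y \in u) (+) (y \in u')]) => [/existsP //|/existsP NE2].
  exfalso; move/negP: Nu; apply; apply/eqP; apply/setP => y. case: (boolP ((y \in u) (+) (y \in u'))) => Hy.
  + by case: NE2; exists y.
  + by move: Hy; case: (y \in u); case: (y \in u').
case: (fl_cases u Hn) => [Hu|[k [Hk Hu]]]; case: (fl_cases u' Hn) => [Hu'|[k' [Hk' Hu']]].
- by have := H y Hy; rewrite (negbTE (Hu y)) (negbTE (Hu' y)).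
- have E := @sw_one n k' u' u Hn Hu' Hu.
  by move/negP: Nu; apply; apply/eqP; apply: esym; apply: E => j Hj; rewrite addbC; apply: H; rewrite addbC.
- by move/negP: Nu; apply; apply/eqP; apply: (sw_one Hn Hu Hu').
- case: (k =P k') => [Ek|/eqP Nk].
  + by have := H y Hy; rewrite Hu Hu' Ek addbb.
  + have E1 : k = ordS k'.
      by apply: (sw_aux Hn Nk Hk Hk') => j Hj; rewrite -Hu -Hu'; apply: H.
    have E2 : k' = ordS k.
      apply: (sw_aux Hn _ Hk' Hk); first by rewrite eq_sym.
      by move=> j Hj; rewrite addbC -Hu -Hu'; apply: H; rewrite addbC.
    by have := ordS2_neq k Hn; rewrite -E2 -E1 eqxx.
Qed.

Lemma symd_sub n (a b J : vert n) : a \subset J -> b \subset J -> symd a b \subset J.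
Proof. move=> /subsetP Ha /subsetP Hb; apply/subsetP => x; rewrite in_symd.
by case: (boolP (x \in a)) => [/Ha|_ /Hb].
Qed.

Lemma symd_shift n (v u w : vert n) : symd u w = symd (symd v u) (symd v w).
Proof. apply/setP => x; rewrite !in_symd.
by case: (x \in u); case: (x \in w); case: (x \in v).
Qed.

Lemma symd_togA n (v u : vert n) j : symd v (tog u j) = symd (symd v u) [set j].
Proof. apply/setP => x; rewrite /tog !in_symd.
by case: (x \in u); case: (x \in v); case: (x \in [set j]).
Qed.

Lemma in_face n (J v u : vert n) : (u \in face J v) = (symd v u \subset J).
Proof. by rewrite /face inE. Qed.

Lemma sink_char n (Hn : 1 < n) (J v u : vert n) :
  sink_in (psi Hn) (face J v) u = (u \in face J v) && (so u :&: J == set0).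
Proof. rewrite /sink_in. apply/andP/andP => [[Hu /forallP H]|[Hu /eqP H0]]; split => //.
- apply/eqP/setP => j; rewrite !inE; apply/negP => /andP [Js Jj].
  have Hw : tog u j \in face J v.
    rewrite in_face symd_togA; apply: symd_sub; first by rewrite -in_face.
    by rewrite sub1set.
  have := H (tog u j); rewrite Hw /= arcR_tog.
  by rewrite Js.
- apply/forallP => w; apply/implyP => Hw; apply/negP => /existsP [j /andP [/eqP E Hj]].
  have Jj : j \in J.
    have : symd u w \subset J by rewrite (symd_shift v); apply: symd_sub; rewrite -in_face.
    by rewrite E sub1set.
  have : j \in so u :&: J by rewrite !inE Hj Jj.
  by rewrite H0 inE.
Qed.

Lemma uso_psi n (Hn : 2 < n) : USO (psi (ltnW Hn)).
Proof. move=> J v _.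
set P := powerset J.
set h := fun x : vert n => so (symd v x) :&: J.
have hinj : {in P &, injective h}.
  move=> x x' Hx Hx' Ex. apply/eqP; apply/negPn/negP => Nx.
  have Nu : symd v x != symd v x'.
    by apply: contra Nx => /eqP E; rewrite -(symdK v x) E symdK.
  have [j /andP [Hj1 Hj2]] := sw Hn Nu.
  have Jj : j \in J.
    move: Hj1; rewrite -symd_shift => Hj1.
    have : symd x x' \subset J by apply: symd_sub; rewrite -powersetE.
    by move/subsetP; apply.
  move: Hj2; rewrite in_symd.
  have : (j \in h x) = (j \in h x') by rewrite Ex.
  rewrite /h !in_setI Jj !andbT => ->. by case: (j \in so (symd v x')).
have hP : h @: P = P.
  apply/eqP; rewrite eqEcard card_in_imset // leqnn andbT.
  apply/subsetP => y /imsetP [x _ ->]; by rewrite powersetE subsetIr.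
have : set0 \in h @: P by rewrite hP powersetE sub0set.
case/imsetP => x Hx E0.
exists (symd v x); split.
- rewrite sink_char in_face symdK -powersetE Hx /=. by rewrite -/(h x) -E0.
- move=> u'; rewrite sink_char => /andP [Hu' /eqP H0].
  have Hx' : symd v u' \in P by rewrite powersetE -in_face.
  have : h (symd v u') = h x by rewrite -E0 /h symdK H0.
  move/(hinj _ _ Hx' Hx) => <-. by rewrite symdK.
Qed.

Lemma fl_pr n (k : 'I_n) : 2 < n -> fl (pr k) k = false.
Proof. move=> Hn; apply/negbTE/existsP => [[k' /andP [Hk /eqP E]]].
have := key_uniq Hn (k := k) (u := pr k); rewrite eqxx orbT => /(_ _ isT Hk) Ek.
by have := ordS_neq k (ltnW Hn); rewrite -Ek in E; rewrite -E eqxx.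
Qed.

Lemma fl_1 n (k : 'I_n) : 1 < n -> fl [set k] k = false.
Proof. move=> Hn; apply/negbTE/existsP => [[k' /andP [/orP [] /eqP E /eqP Ek]]].
- move/set1_inj: E => E; subst k'. by have := ordS_neq k Hn; rewrite -Ek eqxx.
- by have := pr_neq1 k' k Hn; rewrite -/(pr k') -E eqxx.
Qed.

Lemma step n (k : 'I_n) (Hn : 2 < n) : connect (arcR (n:=n)) [set k] [set ordS k].
Proof. have Hn1 : 1 < n by lia.
apply: (connect_trans (y := pr k)); apply: connect1.
- rewrite -tog1 // arcR_tog inE (negbTE (ordS_neq k Hn1)) /=.
  by apply/existsP; exists k; rewrite !eqxx.
- have -> : [set ordS k] = tog (pr k) k.
    apply/setP => x; rewrite in_tog !inE.
      case: (x =P k) => [->|_]; first by rewrite eq_sym (negbTE (ordS_neq k Hn1)).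
    by rewrite addbF.
  by rewrite arcR_tog fl_pr // !inE eqxx.
Qed.

Lemma val_iter n (k : 'I_n) m : val (iter m (@ordS n) k) = (k + m) %% n.
Proof. elim: m => [|m IH] /=; first by rewrite addn0 modn_small.
by rewrite IH -addn1 modnDml addn1 addnS.
Qed.

Lemma conn_all n (k j : 'I_n) (Hn : 2 < n) : connect (arcR (n:=n)) [set k] [set j].
Proof.
have E : j = iter (j + n - k) (@ordS n) k.
  apply: val_inj; rewrite val_iter.
  have := ltn_ord k; have := ltn_ord j => Hj Hk.
  have -> : k + (j + n - k) = j + n by lia.
  by rewrite modnDr modn_small.
rewrite E; elim: (j + n - k) => [|m IH] /=; first exact: connect0.
apply: connect_trans IH _; exact: step.
Qed.

Lemma so1 n (j : 'I_n) : 1 < n -> j \in so [set j].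
Proof. by move=> Hn; rewrite inE fl_1 // inE eqxx. Qed.

Lemma reach_single n (Hn : 2 < n) : forall (u : vert n), u != set0 ->
  exists a, connect (arcR (n:=n)) u [set a].
Proof.
have Hn1 : 1 < n by lia.
move=> u; move Hc: #|u| => c; elim: c {-2}c (leqnn c) u Hc => [|c IH] c' Hc' u Hu Nu.
- by move: Hc'; rewrite leqn0 => /eqP Hc; move: Hu Nu; rewrite Hc => /eqP; rewrite cards_eq0 => ->.
- case: (boolP [exists k, u == pr k]) => [/existsP [k /eqP Ek]|Npr].
  + exists (ordS k); apply: connect1; rewrite Ek.
    have -> : [set ordS k] = tog (pr k) k.
      apply/setP => x; rewrite in_tog !inE.
      case: (x =P k) => [->|_]; first by rewrite eq_sym (negbTE (ordS_neq k Hn1)).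
      by rewrite addbF.
    by rewrite arcR_tog fl_pr // !inE eqxx.
  + case: (boolP (c' == 1)) => [/eqP H1|N1].
      by move: Hu; rewrite H1 => /eqP /cards1P [a ->]; exists a; exact: connect0.
    have [a Ha] : exists a, a \in u by apply/set0Pn.
    have Hw : #|tog u a| = c'.-1.
      have -> : tog u a = u :\ a.
        by apply/setP => x; rewrite in_tog !inE; case: (x =P a) => [->|_]; rewrite ?Ha /= ?addbF ?andbT.
      by rewrite (cardsD1 a u) Ha in Hu; rewrite -Hu.
    have Nw : tog u a != set0.
      rewrite -cards_eq0 Hw. apply/eqP => H0. move: N1 Nu.
      case: c' Hc' Hu H0 Hw => [|[|c'']] //= _ Hu _ _ _.
      by move/eqP: Hu; rewrite cards_eq0 => /eqP ->; rewrite eqxx.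
    have [b Hb] := IH c'.-1 ltac:(lia) (tog u a) Hw Nw.
    exists b; apply: connect_trans Hb; apply: connect1.
    rewrite arcR_tog Ha /=.
    apply/negP => /existsP [k /andP [/orP [] /eqP Ek _]].
    * by move: Hu; rewrite Ek cards1 => E1; move: N1; rewrite -E1.
    * by move/existsP: Npr; apply; exists k; rewrite Ek.
Qed.

Lemma arc1 n (k : 'I_n) (Hn : 2 < n) : arcR [set k] (pr k).
Proof. have Hn1 : 1 < n by lia.
rewrite -tog1 // arcR_tog inE (negbTE (ordS_neq k Hn1)) /=.
by apply/existsP; exists k; rewrite !eqxx.
Qed.

Lemma arc2 n (k : 'I_n) (Hn : 2 < n) : arcR (pr k) [set ordS k].
Proof. have Hn1 : 1 < n by lia.
have -> : [set ordS k] = tog (pr k) k.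
  apply/setP => x; rewrite in_tog !inE.
  case: (x =P k) => [->|_]; first by rewrite eq_sym (negbTE (ordS_neq k Hn1)).
  by rewrite addbF.
by rewrite arcR_tog fl_pr // !inE eqxx.
Qed.

Lemma card_arc n (a b : vert n) : arcR a b -> #|a| <= #|b| + 1.
Proof. move/arcR_adj/eqP => H1. rewrite -H1.
apply: (leq_trans _ (leq_card_setU b (symd a b)).1). apply: subset_leq_card; apply/subsetP => x Hx.
rewrite in_setU in_symd Hx /=. by case: (x \in b).
Qed.

Lemma card_path n (x : vert n) p : path (arcR (n:=n)) x p -> #|x| <= #|last x p| + size p.
Proof. elim: p x => [|y p IH] x /=; first by rewrite addn0.
move=> /andP [Hxy Hp]. have := card_arc Hxy. have := IH y Hp. move=> h1 h2; rewrite addnS -addn1; exact: leq_trans h2 (leq_add h1 (leqnn 1)).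
Qed.

Lemma reach_full n (Hn : 2 < n) (u : vert n) : u != set0 ->
  reachmap (psi (ltnW Hn)) u = setT.
Proof. move=> Nu. have [a Ha] := reach_single Hn Nu.
apply/setP => j; rewrite /reachmap in_setT in_setU; apply/orP; right.
apply/bigcupP; exists [set j].
- apply: connect_trans Ha _. exact: conn_all.
- rewrite outmapE; apply: so1; lia.
Qed.

Theorem theorem12 : forall n : nat, 3 <= n ->
  exists psi : orientation n,
    [/\ USO psi, cyclic psi & forall i : nat, i < n -> ~ nice psi i].
Proof.
move=> n Hn. have Hn1 : 1 < n by lia.
exists (psi (ltnW Hn)); split.
- exact: uso_psi.
- have Hn0 : 0 < n by lia.
  set k := Ordinal Hn0.
  exists [set k], (pr k); split; first exact: arc1.
  apply: connect_trans (conn_all (ordS k) k Hn). apply: connect1. exact: arc2.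
- move=> i Hi Hnice.
  have Hn0 : 0 < n by lia.
  set k := Ordinal Hn0.
  have NS : ~~ global_sink (psi (ltnW Hn)) setT.
    rewrite /global_sink outmapE. apply/set0Pn; exists k.
    rewrite inE in_setT /=. apply/negP => /existsP [k' /andP [/orP [] /eqP E _]].
    + by have := cardsT 'I_n; rewrite E cards1 card_ord; lia.
    + have := cardsT 'I_n; rewrite E card_ord /pr cards2; case: (k' == ordS k') => /=; lia.
  have [u [[p [Hp Hl Hs]] Hpr]] := Hnice _ NS.
  have Nu : u != set0.
    rewrite -cards_eq0; apply/eqP => H0.
    have := card_path Hp. rewrite Hl H0 cardsT card_ord. lia.
  move: Hpr; rewrite reach_full // properE subsetT /=.
  by rewrite andbF.
Qed.
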